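(* Every Steiner $3$-regular liner $X$ is $p$-parallel for some $p\in\{0,1\}$. Consequently, $X$ is projective or affine.
   Context: A liner is a set $X$ of points with a family of subsets called lines such that any two distinct points lie in a unique line and every line contains at least two points. For distinct $x,y$, $\overline{xy}$ is the line through them and $\overline{xx}:=\{x\}$. A set is flat if it contains $\overline{xy}$ for all its distinct points; $\overline A$ is the smallest flat containing $A$; the rank $\|A\|$ is the smallest cardinality of $B\subseteq X$ with $A\subseteq\overline B$; a plane is a flat of rank 3. $X$ is Steiner if every line has exactly three points. $X$ is $3$-regular if for every $A\subseteq X$ with $|A|<3$ and points $o\in\overline A$, $p\in X\setminus\overline A$, we have $\overline{\{p\}\cup A}=\bigcup_{u\in\overline{op}}\bigcup_{a\in\overline A}\overline{ua}$. For a cardinal $\kappa$, $X$ is $\kappa$-parallel if for every plane $P$, line $L\subseteq P$ and point $x\in P\setminus L$ there exist exactly $\kappa$ lines $\Lambda$ with $x\in\Lambda\subseteq P\setminus L$. $X$ is projective if for all $o,x,y\in X$, $p\in\overline{xy}$ and $v\in\overline{oy}\setminus\{p\}$ we have $\overline{vp}\cap\overline{ox}\neq\varnothing$. $X$ is affine if for all $o,x,y\in X$ and $p\in\overline{xy}\setminus\overline{ox}$ there exists $u\in\overline{oy}$ such that for every $v\in\overline{oy}$: $u=v$ iff $\overline{vp}\cap\overline{ox}=\varnothing$. *)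

(* Defs.v *)
From Stdlib Require Import List.
Import ListNotations.

Section Liner.
Variable X : Type.
Variable lines : (X -> Prop) -> Prop.

Definition seteq (A B : X -> Prop) : Prop := forall x, A x <-> B x.
Definition subset (A B : X -> Prop) : Prop := forall x, A x -> B x.

Definition is_liner : Prop :=
  (forall x y, x <> y ->
     exists L, lines L /\ L x /\ L y /\
       forall L', lines L' -> L' x -> L' y -> seteq L' L) /\
  (forall L, lines L -> exists x y, x <> y /\ L x /\ L y).

Definition line (x y : X) : X -> Prop :=
  fun z => (x = y /\ z = x) \/ (x <> y /\ exists L, lines L /\ L x /\ L y /\ L z).

Definition flat (F : X -> Prop) : Prop :=
  forall x y, F x -> F y -> x <> y -> subset (line x y) F.

Definition closure (A : X -> Prop) : X -> Prop :=
  fun z => forall F, flat F -> subset A F -> F z.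

Definition of_list (l : list X) : X -> Prop := fun x => In x l.

Definition has_rank (A : X -> Prop) (n : nat) : Prop :=
  (exists l : list X, NoDup l /\ length l = n /\ subset A (closure (of_list l))) /\
  (forall l : list X, length l < n -> ~ subset A (closure (of_list l))).

Definition plane (P : X -> Prop) : Prop := flat P /\ has_rank P 3.

Definition steiner : Prop :=
  forall L, lines L -> exists a b c, a <> b /\ a <> c /\ b <> c /\
    seteq L (fun z => z = a \/ z = b \/ z = c).

(* 3-regular: every A with |A| < 3 is the set of elements of a list of length < 3. *)
Definition regular3 : Prop :=
  forall (l : list X) (o p : X), length l < 3 ->
    let A := of_list l in
    closure A o -> ~ closure A p ->
    seteq (closure (fun z => z = p \/ A z))
          (fun z => exists u a, line o p u /\ closure A a /\ line u a z).

(* "there exist exactly k sets satisfying Q" (sets counted up to extensional equality) *)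
Definition exactly_k_sets (k : nat) (Q : (X -> Prop) -> Prop) : Prop :=
  exists ls : list (X -> Prop),
    length ls = k /\ (forall L, In L ls -> Q L) /\
    ForallOrdPairs (fun L1 L2 => ~ seteq L1 L2) ls /\
    (forall L, Q L -> exists L', In L' ls /\ seteq L L').

Definition k_parallel (k : nat) : Prop :=
  forall P L x, plane P -> lines L -> subset L P -> P x -> ~ L x ->
    exactly_k_sets k (fun M => lines M /\ M x /\ subset M (fun z => P z /\ ~ L z)).

Definition projective : Prop :=
  forall o x y p v, line x y p -> line o y v -> v <> p ->
    exists z, line v p z /\ line o x z.

Definition affine : Prop :=
  forall o x y p, line x y p -> ~ line o x p ->
    exists u, line o y u /\
      forall v, line o y v -> (u = v <-> ~ exists z, line v p z /\ line o x z).

End Liner.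

(* Main.v *)
Require Import Defs.
From Stdlib Require Import List Classical ClassicalEpsilon Lia.
Import ListNotations.

Section Main.
Variable X : Type.
Variable lines : (X -> Prop) -> Prop.
Hypothesis HL : is_liner X lines.
Hypothesis HS : steiner X lines.
Hypothesis HR : regular3 X lines.

Local Notation ln := (line X lines).

Lemma uniq_line : forall L1 L2 u v, lines L1 -> lines L2 -> L1 u -> L1 v -> L2 u -> L2 v ->
  u <> v -> forall w, L1 w <-> L2 w.
Proof.
  intros L1 L2 u v H1 H2 a b c d Huv w.
  destruct HL as [HL1 _]. destruct (HL1 u v Huv) as [L [HLl [Lu [Lv U]]]].
  pose proof (U L1 H1 a b w). pose proof (U L2 H2 c d w). tauto.
Qed.

Lemma line3 : forall x y, x <> y -> exists z, z <> x /\ z <> y /\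
  forall w, ln x y w <-> (w = x \/ w = y \/ w = z).
Proof.
  intros x y Hxy. destruct HL as [H1 H2]. destruct (H1 x y Hxy) as [L [HLl [Lx [Ly Luniq]]]].
  destruct (HS L HLl) as [a [b [c [Hab [Hac [Hbc HLe]]]]]].
  assert (Hw: forall w, ln x y w <-> L w).
  { intro w; unfold line; split.
    - intros [[E _]|[_ [L' [HL' [L'x [L'y L'w]]]]]]. contradiction. apply (Luniq L' HL' L'x L'y w); auto.
    - intro Lw. right. split; auto. exists L; auto. }
  pose proof (proj1 (HLe x) Lx) as Hx. pose proof (proj1 (HLe y) Ly) as Hy.
  destruct Hx as [ -> | [ -> | -> ] ]; destruct Hy as [ -> | [ -> | -> ] ]; try congruence;
  solve [ exists a; split; [congruence|split;[congruence|]]; intro w; rewrite Hw; specialize (HLe w); simpl in HLe; rewrite HLe; intuition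
        | exists b; split; [congruence|split;[congruence|]]; intro w; rewrite Hw; specialize (HLe w); simpl in HLe; rewrite HLe; intuition
        | exists c; split; [congruence|split;[congruence|]]; intro w; rewrite Hw; specialize (HLe w); simpl in HLe; rewrite HLe; intuition ].
Qed.

Definition th (x y : X) : X := epsilon (inhabits x)
  (fun z => (x = y /\ z = x) \/ (x <> y /\ z <> x /\ z <> y /\ ln x y z)).

Lemma th_spec : forall x y, (x = y /\ th x y = x) \/
   (x <> y /\ th x y <> x /\ th x y <> y /\ ln x y (th x y)).
Proof.
  intros. unfold th. apply epsilon_spec. destruct (classic (x = y)).
  - exists x; left; auto.
  - destruct (line3 x y H) as [z [? [? Hz]]]. exists z. right. repeat split; auto. apply Hz; auto.
Qed.

Lemma th_xx : forall x, th x x = x.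
Proof. intro x. destruct (th_spec x x) as [[_ E]|[E _]]; auto. congruence. Qed.

Lemma line_th : forall x y w, ln x y w <-> w = x \/ w = y \/ w = th x y.
Proof.
  intros x y w. destruct (classic (x = y)) as [E|Hxy].
  - subst. rewrite th_xx. unfold line. split.
    + intros [[_ E]|[E _]]; auto. congruence.
    + intros [E|[E|E]]; left; auto.
  - destruct (line3 x y Hxy) as [z [Hzx [Hzy Hz]]].
    destruct (th_spec x y) as [[E _]|[_ [T1 [T2 T3]]]]. contradiction.
    apply Hz in T3. assert (th x y = z) by (destruct T3 as [?|[?|?]]; congruence).
    rewrite Hz. rewrite H. tauto.
Qed.

Lemma ln_sym : forall x y w, ln x y w <-> ln y x w.
Proof.
  intros x y w; unfold line; split.
  - intros [[E F]|[E [L [a [b [c d]]]]]]. left; subst; auto. right; split; auto. exists L; tauto.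
  - intros [[E F]|[E [L [a [b [c d]]]]]]. left; subst; auto. right; split; auto. exists L; tauto.
Qed.

Lemma th_comm : forall x y, th x y = th y x.
Proof.
  intros x y. destruct (classic (x = y)) as [E|Hxy]. subst; auto.
  destruct (th_spec y x) as [[E _]|[_ [T1 [T2 T3]]]]. congruence.
  apply ln_sym in T3. apply line_th in T3. destruct T3 as [?|[?|?]]; congruence.
Qed.

Lemma th_ne : forall x y, x <> y -> th x y <> x /\ th x y <> y.
Proof. intros x y H. destruct (th_spec x y) as [[E _]|[_ [T1 [T2 T3]]]]; tauto. Qed.

Lemma line_obj : forall x y, x <> y -> exists L, lines L /\ L x /\ L y /\ forall w, L w <-> ln x y w.
Proof.
  intros x y Hxy. destruct HL as [HL1 _]. destruct (HL1 x y Hxy) as [L [HLl [Lx [Ly U]]]].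
  exists L; repeat split; auto.
  - intro Lw. unfold line. right. split; auto. exists L; auto.
  - unfold line. intros [[E _]|[_ [L' [a [b [c d]]]]]]. contradiction. apply (U L' a b c w); exact d.
Qed.

Lemma th_inv : forall x y, th x (th x y) = y.
Proof.
  intros x y. destruct (classic (x = y)) as [E|Hxy]. subst; rewrite !th_xx; auto.
  destruct (th_ne x y Hxy) as [N1 N2].
  destruct (line_obj x y Hxy) as [L [HLl [Lx [Ly LE]]]].
  assert (Lz : L (th x y)) by (apply LE, line_th; auto).
  destruct (line_obj x (th x y) (not_eq_sym N1)) as [L' [HL' [L'x [L'z L'E]]]].
  pose proof (line_th x (th x y) (th x (th x (th x y)))) as K.
  assert (A: L' (th x (th x y))) by (apply L'E, line_th; auto).
  apply (uniq_line L' L x (th x y) HL' HLl L'x L'z Lx Lz (not_eq_sym N1)) in A.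
  apply LE, line_th in A. destruct (th_ne x (th x y) (not_eq_sym N1)) as [M1 M2].
  destruct A as [?|[?|?]]; congruence.
Qed.


Ltac inst1 x l := lazymatch l with
 | nil => idtac
 | cons ?y ?t => pose proof (th_inv x y); pose proof (th_comm x y); inst1 x t end.
Ltac install l0 l := lazymatch l with
 | nil => idtac
 | cons ?x ?t => pose proof (th_xx x); inst1 x l0; install l0 t end.
Ltac qs l := solve [install l l; congruence].

Local Notation flat := (flat X lines).
Local Notation closure := (closure X lines).

Lemma flat_th : forall F, flat F <-> forall x y, F x -> F y -> F (th x y).
Proof.
  intro F; split.
  - intros H x y Fx Fy. destruct (classic (x = y)) as [E|E]. subst; rewrite th_xx; auto.
    apply (H x y Fx Fy E). apply line_th; auto.
  - intros H x y Fx Fy _ z Hz. apply line_th in Hz. destruct Hz as [?|[?|?]]; subst; auto.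
Qed.

Lemma cl_th : forall A x y, closure A x -> closure A y -> closure A (th x y).
Proof. intros A x y Hx Hy F HF HA. apply (proj1 (flat_th F) HF); [apply Hx|apply Hy]; auto. Qed.

Lemma cl_the : forall A x y z, closure A x -> closure A y -> z = th x y -> closure A z.
Proof. intros; subst; apply cl_th; auto. Qed.

Lemma cl_incl : forall (A : X -> Prop) x, A x -> closure A x.
Proof. intros A x Ax F HF HA. apply HA; auto. Qed.

Lemma cl_min : forall (A F : X -> Prop), flat F -> (forall x, A x -> F x) -> forall x, closure A x -> F x.
Proof. intros A F HF HA x Hx. apply Hx; auto. Qed.

Lemma cl_flat : forall A, flat (closure A).
Proof. intro A. apply flat_th. apply cl_th. Qed.

Lemma cl_mono : forall (A B : X -> Prop), (forall x, A x -> closure B x) -> forall x, closure A x -> closure B x.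
Proof. intros A B H. apply cl_min. apply cl_flat. auto. Qed.

Definition cl3 a b c := closure (fun z => z = a \/ z = b \/ z = c).

Lemma cl3_a : forall a b c, cl3 a b c a. Proof. intros; apply cl_incl; auto. Qed.
Lemma cl3_b : forall a b c, cl3 a b c b. Proof. intros; apply cl_incl; auto. Qed.
Lemma cl3_c : forall a b c, cl3 a b c c. Proof. intros; apply cl_incl; auto. Qed.

Lemma cl3_sub : forall a b c a' b' c', cl3 a' b' c' a -> cl3 a' b' c' b -> cl3 a' b' c' c ->
  forall z, cl3 a b c z -> cl3 a' b' c' z.
Proof. intros. unfold cl3 in *. eapply cl_mono; [|eauto]. intros x [?|[?|?]]; subst; auto. Qed.

Definition tri a b p := a <> b /\ p <> a /\ p <> b /\ p <> th a b.

Lemma cl2 : forall a b z, closure (of_list X [a;b]) z <-> z = a \/ z = b \/ z = th a b.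
Proof.
  intros a b z. split.
  - intro H. refine (cl_min _ (fun z => z = a \/ z = b \/ z = th a b) _ _ z H).
    + apply flat_th. intros x y Hx Hy.
      destruct Hx as [Ex|[Ex|Ex]]; destruct Hy as [Ey|[Ey|Ey]]; rewrite Ex, Ey;
        first [ left; qs [a;b;th a b] | right; left; qs [a;b;th a b] | right; right; qs [a;b;th a b] ].
    + intros x [?|[?|[]]]; subst; auto.
  - intros [?|[?|?]]; subst. apply cl_incl; simpl; auto. apply cl_incl; simpl; auto.
    apply cl_th; apply cl_incl; simpl; auto.
Qed.


Definition TRI a b c p q r s u w := tri a b p /\ c = th a b /\ q = th a p /\ r = th p b /\
  s = th p c /\ u = th q b /\ w = th q c.

Ltac unTRI H := let Htri := fresh "Htri" in let Ec := fresh "Ec" in let Eq := fresh "Eq" in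
  let Er := fresh "Er" in let Es := fresh "Es" in let Eu := fresh "Eu" in let Ew := fresh "Ew" in
  let Hab := fresh "Hab" in let Hpa := fresh "Hpa" in let Hpb := fresh "Hpb" in let Hpc := fresh "Hpc" in
  destruct H as [Htri [Ec [Eq [Er [Es [Eu Ew]]]]]]; destruct Htri as [Hab [Hpa [Hpb Hpc]]].

Lemma TRI_ex : forall a b p, tri a b p -> TRI a b (th a b) p (th a p) (th p b) (th p (th a b))
   (th (th a p) b) (th (th a p) (th a b)).
Proof. intros. repeat split; auto; apply H. Qed.

Lemma plane9 : forall a b c p q r s u w, TRI a b c p q r s u w -> forall z, cl3 a b p z ->
  z = a \/ z = b \/ z = c \/ z = p \/ z = q \/ z = r \/ z = s \/ z = u \/ z = w.
Proof.
  intros a b c p q r s u w H. unTRI H.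
  intros z Hz.
  assert (Hc: ~ closure (of_list X [a;b]) p).
  { rewrite cl2. intros [?|[?|?]]; congruence. }
  assert (Ha: closure (of_list X [a;b]) a) by (apply cl_incl; simpl; auto).
  pose proof (HR [a;b] a p ltac:(simpl; lia) Ha Hc z) as K. simpl in K.
  destruct (proj1 K) as [u0 [a0 [H1 [H2 H3]]]].
  - revert Hz. apply cl_mono. intros x [?|[?|?]]; subst; apply cl_incl; simpl; auto.
  - rewrite cl2 in H2. rewrite line_th in H1, H3.
    destruct H1 as [?|[?|?]]; destruct H2 as [?|[?|?]]; subst u0 a0;
    destruct H3 as [?|[?|?]]; subst z;
    solve [ repeat (first [left; qs [a;b;c;p;q;r;s;u;w] | right]); qs [a;b;c;p;q;r;s;u;w] ].
Qed.

Lemma TRI_mem : forall a b c p q r s u w, TRI a b c p q r s u w ->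
  cl3 a b p c /\ cl3 a b p q /\ cl3 a b p r /\ cl3 a b p s /\ cl3 a b p u /\ cl3 a b p w.
Proof.
  intros a b c p q r s u w H. unTRI H.
  pose proof (cl3_a a b p). pose proof (cl3_b a b p). pose proof (cl3_c a b p).
  assert (cl3 a b p c) by (rewrite Ec; apply cl_th; auto).
  assert (cl3 a b p q) by (rewrite Eq; apply cl_th; auto).
  assert (cl3 a b p r) by (rewrite Er; apply cl_th; auto).
  assert (cl3 a b p s) by (rewrite Es; apply cl_th; auto).
  assert (cl3 a b p u) by (rewrite Eu; apply cl_th; auto).
  assert (cl3 a b p w) by (rewrite Ew; apply cl_th; auto).
  tauto.
Qed.

Ltac d9 M := destruct M as [M|[M|[M|[M|[M|[M|[M|[M|M]]]]]]]].

Lemma classify : forall a b c p q r s u w, TRI a b c p q r s u w ->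
  (u = s /\ w = r) \/ (u <> s /\ w <> r).
Proof.
  intros a b c p q r s u w H.
  pose proof (plane9 _ _ _ _ _ _ _ _ _ H) as P9.
  destruct (TRI_mem _ _ _ _ _ _ _ _ _ H) as [mc [mq [mr [ms [mu mw]]]]].
  pose proof (cl3_a a b p) as ma.
  unTRI H.
  destruct (classic (u = s)) as [E1|E1]; destruct (classic (w = r)) as [E2|E2]; auto; exfalso.
  - assert (M := P9 (th r s) (cl_th _ _ _ mr ms)).
    assert (M2 := P9 (th a w) (cl_th _ _ _ ma mw)).
    remember (th r s) as t eqn:Et. remember (th a w) as t2 eqn:Et2.
    d9 M; try qs [a;b;c;p;q;r;s;u;w;t;t2]; d9 M2; qs [a;b;c;p;q;r;s;u;w;t;t2].
  - assert (M := P9 (th r s) (cl_th _ _ _ mr ms)).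
    assert (M2 := P9 (th a u) (cl_th _ _ _ ma mu)).
    remember (th r s) as t eqn:Et. remember (th a u) as t2 eqn:Et2.
    d9 M; try qs [a;b;c;p;q;r;s;u;w;t;t2]; d9 M2; qs [a;b;c;p;q;r;s;u;w;t;t2].
Qed.

Lemma fano_facts : forall a b c p q r s u w, TRI a b c p q r s u w -> u = s -> w = r ->
  th a r = s /\ forall z, cl3 a b p z -> In z [a;b;c;p;q;r;s].
Proof.
  intros a b c p q r s u w H E1 E2.
  pose proof (plane9 _ _ _ _ _ _ _ _ _ H) as P9.
  destruct (TRI_mem _ _ _ _ _ _ _ _ _ H) as [mc [mq [mr [ms [mu mw]]]]].
  pose proof (cl3_a a b p) as ma.
  unTRI H. split.
  - assert (M := P9 (th a r) (cl_th _ _ _ ma mr)).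
    remember (th a r) as t eqn:Et.
    d9 M; qs [a;b;c;p;q;r;s;u;w;t].
  - intros z Hz. specialize (P9 z Hz). rewrite E1, E2 in P9. repeat (destruct P9 as [P9|P9]; [subst z; simpl; tauto|]); subst z; simpl; tauto.
Qed.

Lemma ag_facts : forall a b c p q r s u w, TRI a b c p q r s u w -> u <> s -> w <> r ->
  th q r = s /\ th p u = w.
Proof.
  intros a b c p q r s u w H E1 E2.
  pose proof (plane9 _ _ _ _ _ _ _ _ _ H) as P9.
  destruct (TRI_mem _ _ _ _ _ _ _ _ _ H) as [mc [mq [mr [ms [mu mw]]]]].
  pose proof (cl3_a a b p) as ma.
  pose proof (cl3_c a b p) as mp.
  unTRI H. split.
  - assert (M := P9 (th q r) (cl_th _ _ _ mq mr)).
    remember (th q r) as t eqn:Et.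
    d9 M; qs [a;b;c;p;q;r;s;u;w;t].
  - assert (M := P9 (th p u) (cl_th _ _ _ mp mu)).
    remember (th p u) as t eqn:Et.
    d9 M; qs [a;b;c;p;q;r;s;u;w;t].
Qed.

Definition typeF (P : X -> Prop) := exists l : list X, length l <= 7 /\ forall z, P z -> In z l.
Definition typeA (P : X -> Prop) := exists l : list X, NoDup l /\ length l = 9 /\ forall z, In z l -> P z.

Lemma FA_excl : forall P, typeF P -> typeA P -> False.
Proof.
  intros P [l [Hl Hl']] [m [Hm [Hm' Hm'']]].
  assert (length m <= length l). { apply NoDup_incl_length; auto. intros z Hz; auto. }
  lia.
Qed.

Lemma typeF_ext : forall P Q, (forall z, Q z -> P z) -> typeF P -> typeF Q.
Proof. intros P Q H [l [A B]]. exists l; split; auto. Qed.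
Lemma typeA_ext : forall P Q, (forall z, P z -> Q z) -> typeA P -> typeA Q.
Proof. intros P Q H [l [A [B C]]]. exists l; repeat split; auto. Qed.

Ltac nodup_tac l := repeat (constructor; [ let H := fresh in intro H; simpl in H;
   repeat (destruct H as [H|H]; [qs l|]); exact H | ]); constructor.

Lemma tri_cases : forall a b c p q r s u w, TRI a b c p q r s u w ->
  (typeF (cl3 a b p) /\ u = s /\ w = r /\ th a r = s /\ forall z, cl3 a b p z -> In z [a;b;c;p;q;r;s]) \/
  (typeA (cl3 a b p) /\ u <> s /\ w <> r /\ th q r = s /\ th p u = w /\ NoDup [a;b;c;p;q;r;s;u;w]).
Proof.
  intros a b c p q r s u w H.
  destruct (classify _ _ _ _ _ _ _ _ _ H) as [[E1 E2]|[E1 E2]].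
  - left. destruct (fano_facts _ _ _ _ _ _ _ _ _ H E1 E2) as [F1 F2].
    repeat split; auto. exists [a;b;c;p;q;r;s]. split; auto.
  - right. destruct (ag_facts _ _ _ _ _ _ _ _ _ H E1 E2) as [F1 F2].
    destruct (TRI_mem _ _ _ _ _ _ _ _ _ H) as [mc [mq [mr [ms [mu mw]]]]].
    pose proof (cl3_a a b p) as ma. pose proof (cl3_b a b p) as mb. pose proof (cl3_c a b p) as mp.
    assert (ND : NoDup [a;b;c;p;q;r;s;u;w]) by (unTRI H; nodup_tac [a;b;c;p;q;r;s;u;w]).
    repeat split; auto. exists [a;b;c;p;q;r;s;u;w]. repeat split; auto.
    intros z Hz; simpl in Hz; repeat (destruct Hz as [Hz|Hz]; [subst z; auto|]); contradiction.
Qed.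

Lemma tri_F : forall a b c p q r s u w, TRI a b c p q r s u w -> typeF (cl3 a b p) ->
  u = s /\ w = r /\ th a r = s /\ forall z, cl3 a b p z -> In z [a;b;c;p;q;r;s].
Proof.
  intros. destruct (tri_cases _ _ _ _ _ _ _ _ _ H) as [A|A]. tauto.
  exfalso; apply (FA_excl (cl3 a b p)); tauto.
Qed.

Lemma tri_A : forall a b c p q r s u w, TRI a b c p q r s u w -> typeA (cl3 a b p) ->
  u <> s /\ w <> r /\ th q r = s /\ th p u = w /\ NoDup [a;b;c;p;q;r;s;u;w].
Proof.
  intros. destruct (tri_cases _ _ _ _ _ _ _ _ _ H) as [A|A]. 
  exfalso; apply (FA_excl (cl3 a b p)); tauto. tauto.
Qed.

Lemma tri_FA : forall a b p, tri a b p -> typeF (cl3 a b p) \/ typeA (cl3 a b p).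
Proof.
  intros a b p H. destruct (tri_cases _ _ _ _ _ _ _ _ _ (TRI_ex a b p H)); tauto.
Qed.

Lemma tri_perm : forall a b c, tri a b c ->
  tri b a c /\ tri a c b /\ tri b c a /\ tri c a b /\ tri c b a.
Proof.
  intros a b c [H1 [H2 [H3 H4]]]. unfold tri.
  repeat split; intro; qs [a;b;c].
Qed.

Lemma cl3_perm : forall a b c t,
  (cl3 a b c t <-> cl3 b a c t) /\ (cl3 a b c t <-> cl3 a c b t) /\ (cl3 a b c t <-> cl3 b c a t)
  /\ (cl3 a b c t <-> cl3 c a b t) /\ (cl3 a b c t <-> cl3 c b a t).
Proof.
  intros a b c t. pose proof (cl3_a a b c). pose proof (cl3_b a b c). pose proof (cl3_c a b c).
  repeat split; apply cl3_sub; first [apply cl3_a | apply cl3_b | apply cl3_c].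
Qed.

Lemma exch : forall a b p d, tri a b p -> cl3 a b p d -> tri a b d ->
  forall t, cl3 a b d t <-> cl3 a b p t.
Proof.
  intros a b p d H Hd Hd'. split.
  - apply cl3_sub; auto; [apply cl3_a | apply cl3_b].
  - apply cl3_sub; [apply cl3_a | apply cl3_b |].
    pose proof (TRI_ex a b p H) as T.
    pose proof (plane9 _ _ _ _ _ _ _ _ _ T d Hd) as M.
    pose proof (cl3_a a b d) as ma. pose proof (cl3_b a b d) as mb. pose proof (cl3_c a b d) as md.
    pose proof (cl_th _ _ _ ma mb) as mc.
    pose proof (cl_th _ _ _ mb md) as mbd.
    pose proof (cl_th _ _ _ mc md) as mcd.
    destruct Hd' as [_ [D1 [D2 D3]]].
    remember (th a b) as c. remember (th a p) as q. remember (th p b) as r.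
    remember (th p c) as s. remember (th q b) as u. remember (th q c) as w.
    destruct H as [Hab [Hpa [Hpb Hpc]]].
    d9 M; try (exfalso; congruence);
    first [ apply (cl_the _ a d p ma md); qs [a;b;c;d;p;q;r;s;u;w]
          | apply (cl_the _ b d p mb md); qs [a;b;c;d;p;q;r;s;u;w]
          | apply (cl_the _ c d p mc md); qs [a;b;c;d;p;q;r;s;u;w]
          | subst d; apply cl3_c
          | apply (cl_the _ a (th b d) p ma mbd); qs [a;b;c;d;p;q;r;s;u;w]
          | apply (cl_the _ a (th c d) p ma mcd); qs [a;b;c;d;p;q;r;s;u;w] ].
Qed.

Lemma step1 : forall g1 g2 g3 d, tri g1 g2 g3 -> cl3 g1 g2 g3 d ->
  exists h1 h2, tri d h1 h2 /\ forall t, cl3 d h1 h2 t <-> cl3 g1 g2 g3 t.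
Proof.
  intros g1 g2 g3 d H Hd.
  destruct (tri_perm _ _ _ H) as [T1 [T2 [T3 [T4 T5]]]].
  destruct (classic (d = g1)) as [E|N1]. { rewrite E. exists g2, g3. split; auto. tauto. }
  destruct (classic (d = g2)) as [E|N2]. { rewrite E. exists g1, g3. split. apply T1.
     intro t; pose proof (cl3_perm g1 g2 g3 t); tauto. }
  destruct (classic (d = th g1 g2)) as [E|N3].
  -
    assert (tri g1 g3 d) by (destruct H as [A [B [C D]]]; repeat split; intro; qs [g1;g2;g3;d]).
    assert (Hd2 : cl3 g1 g3 g2 d) by (destruct (cl3_perm g1 g2 g3 d) as [_ [K _]]; apply (proj1 K); auto).
    pose proof (exch g1 g3 g2 d T2 Hd2 H0) as EX.
    exists g1, g3. split. destruct (tri_perm _ _ _ H0) as [_ [_ [_ [X1 _]]]]; exact X1.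
    intro t. pose proof (cl3_perm d g1 g3 t). pose proof (cl3_perm g1 g3 d t).
    pose proof (cl3_perm g1 g2 g3 t). specialize (EX t). tauto.
  - assert (tri g1 g2 d) by (destruct H as [A [B [C D]]]; repeat split; auto).
    pose proof (exch g1 g2 g3 d H Hd H0) as EX.
    exists g1, g2. split. destruct (tri_perm _ _ _ H0) as [_ [_ [_ [X1 _]]]]; exact X1.
    intro t. pose proof (cl3_perm d g1 g2 t). pose proof (cl3_perm g1 g2 d t). specialize (EX t). tauto.
Qed.

Lemma step2 : forall x h1 h2 y, tri x h1 h2 -> cl3 x h1 h2 y -> y <> x ->
  exists h, tri x y h /\ forall t, cl3 x y h t <-> cl3 x h1 h2 t.
Proof.
  intros x h1 h2 y H Hy Nyx.
  destruct (tri_perm _ _ _ H) as [T1 [T2 [T3 [T4 T5]]]].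
  destruct (classic (y = h1)) as [E|N1]. { rewrite E. exists h2. split; auto. tauto. }
  destruct (classic (y = h2)) as [E|N2]. { rewrite E. exists h1. split; auto.
     intro t; pose proof (cl3_perm x h1 h2 t); tauto. }
  destruct (classic (y = th x h1)) as [E|N3].
  - assert (tri x h2 y) by (destruct H as [A [B [C D]]]; repeat split; auto; intro; qs [x;h1;h2;y]).
    assert (Hy2 : cl3 x h2 h1 y) by (destruct (cl3_perm x h1 h2 y) as [_ [K _]]; apply (proj1 K); auto).
    pose proof (exch x h2 h1 y T2 Hy2 H0) as EX.
    exists h2. split. destruct (tri_perm _ _ _ H0) as [_ [X1 _]]; exact X1.
    intro t. pose proof (cl3_perm x h2 y t). pose proof (cl3_perm x h1 h2 t). specialize (EX t). tauto.
  - assert (tri x h1 y) by (repeat split; auto; apply H).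
    pose proof (exch x h1 h2 y H Hy H0) as EX.
    exists h1. split. destruct (tri_perm _ _ _ H0) as [_ [X1 _]]; exact X1.
    intro t. pose proof (cl3_perm x h1 y t). specialize (EX t). tauto.
Qed.

Lemma G1 : forall a b c x y z, tri a b c -> tri x y z -> cl3 a b c x -> cl3 a b c y -> cl3 a b c z ->
  forall t, cl3 x y z t <-> cl3 a b c t.
Proof.
  intros a b c x y z H Hx mx my mz.
  destruct (step1 a b c x H mx) as [h1 [h2 [T1 E1]]].
  assert (my' : cl3 x h1 h2 y) by (apply E1; auto).
  destruct (step2 x h1 h2 y T1 my' (not_eq_sym (proj1 Hx))) as [h [T2 E2]].
  assert (mz' : cl3 x y h z) by (apply E2, E1; auto).
  pose proof (exch x y h z T2 mz' Hx) as E3.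
  intro t. rewrite E3, E2, E1. tauto.
Qed.

Lemma Fq : forall k1 k2 p, tri k1 k2 p -> typeF (cl3 k1 k2 p) ->
  th (th k1 p) k2 = th p (th k1 k2) /\ th (th k1 p) (th k1 k2) = th p k2 /\
  th k1 (th p k2) = th p (th k1 k2).
Proof.
  intros k1 k2 p H F. destruct (tri_F _ _ _ _ _ _ _ _ _ (TRI_ex k1 k2 p H) F) as [A [B [C _]]].
  auto.
Qed.

Lemma AGq : forall k1 k2 p, tri k1 k2 p -> typeA (cl3 k1 k2 p) ->
  th (th k1 p) (th p k2) = th p (th k1 k2) /\
  th p (th (th k1 p) k2) = th (th k1 p) (th k1 k2).
Proof.
  intros k1 k2 p H F. destruct (tri_A _ _ _ _ _ _ _ _ _ (TRI_ex k1 k2 p H) F) as [A [B [C [D _]]]].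
  auto.
Qed.

Lemma typeF_perm : forall a b c, typeF (cl3 a b c) -> typeF (cl3 b a c) /\ typeF (cl3 a c b) /\
  typeF (cl3 b c a) /\ typeF (cl3 c a b) /\ typeF (cl3 c b a).
Proof.
  intros a b c H. repeat split; revert H; apply typeF_ext; intro t; pose proof (cl3_perm a b c t); tauto.
Qed.
Lemma typeA_perm : forall a b c, typeA (cl3 a b c) -> typeA (cl3 b a c) /\ typeA (cl3 a c b) /\
  typeA (cl3 b c a) /\ typeA (cl3 c a b) /\ typeA (cl3 c b a).
Proof.
  intros a b c H. repeat split; revert H; apply typeA_ext; intro t; pose proof (cl3_perm a b c t); tauto.
Qed.

Lemma in_tri_plane : forall a b x z, ~ cl3 a b x z -> z <> a /\ z <> b /\ z <> x /\ z <> th a b /\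
  z <> th a x /\ z <> th b x.
Proof.
  intros a b x z H. pose proof (cl3_a a b x). pose proof (cl3_b a b x). pose proof (cl3_c a b x).
  repeat split; intro; subst; apply H; auto; apply cl_th; auto.
Qed.

Lemma stepA : forall a b x y, tri a b x -> tri a b y -> typeF (cl3 a b x) -> typeA (cl3 a b y) ->
  ~ cl3 a b x y -> typeF (cl3 a x y) \/ typeF (cl3 b x y) \/ typeF (cl3 (th a b) x y).
Proof.
  intros a b x y Tx Ty FP AQ Ny.
  pose proof (cl3_a a b x) as ma. pose proof (cl3_b a b x) as mb. pose proof (cl3_c a b x) as mx.
  pose proof (cl_th _ _ _ ma mb) as mc.
  pose proof (cl_th _ _ _ mx ma) as mta. pose proof (cl_th _ _ _ mx mb) as mtb.
  pose proof (cl_th _ _ _ mx mc) as mtc.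
  remember (th a b) as c eqn:Ec in *.
  destruct (in_tri_plane _ _ _ _ Ny) as [N1 [N2 [N3 [N4 [N5 N6]]]]].
  assert (NyP : forall z, cl3 a b x z -> y <> z) by (intros z Hz E; subst; auto).
  pose proof (NyP _ mc). pose proof (NyP _ mta). pose proof (NyP _ mtb). pose proof (NyP _ mtc).
  assert (NtyP : ~ cl3 a b x (th x y)).
  { intro E. apply Ny. apply (cl_the _ x (th x y)); auto. qs [x;y]. }
  destruct Tx as [Hab [Hxa [Hxb Hxc]]]. destruct Ty as [_ [Hya [Hyb Hyc]]].
  try rewrite <- Ec in Hxc; try rewrite <- Ec in Hyc.
  destruct (classic (typeF (cl3 a x y))) as [F1|F1]; auto.
  destruct (classic (typeF (cl3 b x y))) as [F2|F2]; auto.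
  destruct (classic (typeF (cl3 c x y))) as [F3|F3]; auto. exfalso.
  assert (T1 : tri y a x) by (repeat split; auto; intro; qs [a;b;c;x;y]).
  assert (T2 : tri y b x) by (repeat split; auto; intro; qs [a;b;c;x;y]).
  assert (T3 : tri y c x) by (repeat split; auto; intro; qs [a;b;c;x;y]).
  assert (A1 : typeA (cl3 y a x)).
  { destruct (tri_FA _ _ _ T1) as [F|F]; auto. destruct F1. apply (typeF_perm _ _ _ F). }
  assert (A2 : typeA (cl3 y b x)).
  { destruct (tri_FA _ _ _ T2) as [F|F]; auto. destruct F2. apply (typeF_perm _ _ _ F). }
  assert (A3 : typeA (cl3 y c x)).
  { destruct (tri_FA _ _ _ T3) as [F|F]; auto. destruct F3. apply (typeF_perm _ _ _ F). }
  destruct (AGq _ _ _ T1 A1) as [AG1 _]. destruct (AGq _ _ _ T2 A2) as [AG2 _].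
  destruct (AGq _ _ _ T3 A3) as [AG3 _].
  assert (TP : tri a b x) by (repeat split; congruence).
  assert (TQ : tri a b y) by (repeat split; congruence).
  destruct (Fq _ _ _ TP FP) as [P1 [P2 P3]]. destruct (AGq _ _ _ TQ AQ) as [Q1 _].
  try rewrite <- Ec in P1; try rewrite <- Ec in P2; try rewrite <- Ec in P3; try rewrite <- Ec in Q1.
  remember (th x y) as ty eqn:Ety in *. remember (th x a) as ta eqn:Eta in *. remember (th x b) as tb eqn:Etb in *.
  remember (th x c) as tc eqn:Etc in *.
  remember (th y a) as a' eqn:Ea' in *. remember (th y b) as b' eqn:Eb' in *. remember (th y c) as c' eqn:Ec' in *.
  remember (th x a') as ta' eqn:Eta' in *. remember (th x b') as tb' eqn:Etb' in *. remember (th x c') as tc' eqn:Etc' in *.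
  assert (TW : tri ty ta tb).
  { repeat split; intro; qs [a;b;c;x;y;ty;ta;tb;tc]. }
  pose proof (cl3_a ty ta tb) as wy. pose proof (cl3_b ty ta tb) as wa. pose proof (cl3_c ty ta tb) as wb.
  assert (wa' : cl3 ty ta tb ta') by (apply (cl_the _ ty ta); auto; qs [a;b;c;x;y;ty;ta;tb;tc;a';b';c';ta';tb';tc']).
  assert (wb' : cl3 ty ta tb tb') by (apply (cl_the _ ty tb); auto; qs [a;b;c;x;y;ty;ta;tb;tc;a';b';c';ta';tb';tc']).
  assert (wc : cl3 ty ta tb c) by (apply (cl_the _ ta tb); auto; qs [a;b;c;x;y;ty;ta;tb;tc;a';b';c';ta';tb';tc']).
  assert (back : forall a0 b0 x0, tri a0 b0 x0 -> cl3 ty ta tb a0 -> cl3 ty ta tb b0 -> cl3 ty ta tb x0 ->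
     cl3 a b x a0 -> cl3 a b x b0 -> cl3 a b x x0 -> False).
  { intros a0 b0 x0 T0 W1 W2 W3 P1' P2' P3'.
    pose proof (G1 _ _ _ _ _ _ TW T0 W1 W2 W3 ty) as K1.
    pose proof (G1 _ _ _ _ _ _ TP T0 P1' P2' P3' ty) as K2.
    apply NtyP. tauto. }
  assert (Ntc : ~ cl3 ty ta tb tc).
  { intro W. apply (back ta tb tc); auto.
    repeat split; intro; qs [a;b;c;x;y;ty;ta;tb;tc;a';b';c';ta';tb';tc']. }
  assert (Ntc' : ~ cl3 ty ta tb tc').
  { intro W. apply Ntc. apply (cl_the _ ty tc'); auto; qs [a;b;c;x;y;ty;ta;tb;tc;a';b';c';ta';tb';tc']. }
  assert (T4 : tri a' b' x) by (repeat split; intro; qs [a;b;c;x;y;ty;ta;tb;tc;a';b';c';ta';tb';tc']).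
  destruct (tri_FA _ _ _ T4) as [F4|F4].
  - destruct (Fq _ _ _ T4 F4) as [_ [R2 _]].
    assert (wc' : cl3 ty ta tb c') by (apply (cl_the _ ta' tb'); auto; qs [a;b;c;x;y;ty;ta;tb;tc;a';b';c';ta';tb';tc']).
    assert (wyy : cl3 ty ta tb y) by (apply (cl_the _ c c'); auto; qs [a;b;c;x;y;ty;ta;tb;tc;a';b';c';ta';tb';tc']).
    assert (wx : cl3 ty ta tb x) by (apply (cl_the _ y ty); auto; qs [a;b;c;x;y;ty;ta;tb;tc;a';b';c';ta';tb';tc']).
    assert (wa0 : cl3 ty ta tb a) by (apply (cl_the _ x ta); auto; qs [a;b;c;x;y;ty;ta;tb;tc;a';b';c';ta';tb';tc']).
    assert (wb0 : cl3 ty ta tb b) by (apply (cl_the _ x tb); auto; qs [a;b;c;x;y;ty;ta;tb;tc;a';b';c';ta';tb';tc']).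
    apply (back a b x); auto.
  - destruct (AGq _ _ _ T4 F4) as [R1 _].
    apply Ntc'. apply (cl_the _ ta' tb'); auto; qs [a;b;c;x;y;ty;ta;tb;tc;a';b';c';ta';tb';tc'].
Qed.

Ltac disj3 l := first [left; qs l | right; left; qs l | right; right; qs l].

Lemma on_line_mem : forall u v z w, (w = u \/ w = v \/ w = th u v) -> cl3 u v z w.
Proof.
  intros u v z w [E|[E|E]]; subst; [apply cl3_a | apply cl3_b | apply cl_th; [apply cl3_a|apply cl3_b]].
Qed.

Lemma cl3_line : forall u v u' v' z, u <> v -> u' <> v' ->
  (u' = u \/ u' = v \/ u' = th u v) -> (v' = u \/ v' = v \/ v' = th u v) ->
  forall t, cl3 u' v' z t <-> cl3 u v z t.
Proof.
  intros u v u' v' z Nuv Nuv' H1 H2 t. split.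
  - apply cl3_sub; [apply on_line_mem; auto | apply on_line_mem; auto | apply cl3_c].
  - apply cl3_sub; [ | | apply cl3_c]; apply on_line_mem;
    destruct H1 as [E1|[E1|E1]]; destruct H2 as [E2|[E2|E2]]; disj3 [u;v;u';v'].
Qed.

Lemma FlE : forall y u v u' v', u <> v -> u' <> v' ->
  (u' = u \/ u' = v \/ u' = th u v) -> (v' = u \/ v' = v \/ v' = th u v) ->
  typeF (cl3 u v y) -> typeF (cl3 u' v' y).
Proof.
  intros. revert H3. apply typeF_ext. intro t. apply (cl3_line u v u' v' y); auto.
Qed.

Lemma rule1 : forall p n n' y, tri p n n' -> typeF (cl3 p n n') -> ~ cl3 p n n' y ->
  typeF (cl3 p n y) -> typeF (cl3 p n' y) -> typeF (cl3 n n' y).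
Proof.
  intros p n n' y T FP Ny F1 F2.
  pose proof (cl3_a p n n') as mp. pose proof (cl3_b p n n') as mn. pose proof (cl3_c p n n') as mn'.
  pose proof (cl_th _ _ _ mp mn) as mm1. pose proof (cl_th _ _ _ mp mn') as mm1'.
  pose proof (cl_th _ _ _ mn mn') as mr.
  destruct (in_tri_plane _ _ _ _ Ny) as [N1 [N2 [N3 [N4 [N5 N6]]]]].
  assert (NyP : forall z, cl3 p n n' z -> y <> z) by (intros z Hz E; subst; auto).
  pose proof (NyP _ mr) as N7.
  assert (Ntp : ~ cl3 p n n' (th y p)).
  { intro E. apply Ny. apply (cl_the _ p (th y p)); auto. qs [p;y]. }
  destruct (tri_perm _ _ _ T) as [T1 [T2 [T3 [T4 T5]]]].
  destruct (typeF_perm _ _ _ FP) as [FP1 [FP2 [FP3 [FP4 FP5]]]].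
  destruct (Fq _ _ _ T3 FP3) as [_ [Q2 _]].
  destruct T as [Hpn [Hn'p [Hn'n Hn'c]]].
  assert (TA : tri p n y) by (repeat split; auto).
  assert (TB : tri p n' y) by (repeat split; auto).
  destruct (Fq _ _ _ TA F1) as [_ [R1 _]]. destruct (Fq _ _ _ TB F2) as [_ [R2 _]].
  remember (th p n) as m1 eqn:Em1 in *. remember (th p n') as m1' eqn:Em1' in *.
  remember (th n n') as r eqn:Er in *. remember (th y p) as tp eqn:Etp in *.
  remember (th y n) as tn eqn:Etn in *. remember (th y n') as tn' eqn:Etn' in *.
  remember (th y r) as tr eqn:Etr in *.
  assert (TR : tri tp m1 m1').
  { assert (NtpP : forall z, cl3 p n n' z -> tp <> z) by (intros z Hz E; subst; auto).
    pose proof (NtpP _ mm1). pose proof (NtpP _ mm1'). pose proof (NtpP _ mr).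
    repeat split; intro; qs [p;n;n';y;m1;m1';r;tp;tn;tn';tr]. }
  pose proof (cl3_a tp m1 m1') as rp. pose proof (cl3_b tp m1 m1') as rm. pose proof (cl3_c tp m1 m1') as rm'.
  assert (rn : cl3 tp m1 m1' tn) by (apply (cl_the _ tp m1); auto; qs [p;n;n';y;m1;m1';r;tp;tn;tn';tr]).
  assert (rn' : cl3 tp m1 m1' tn') by (apply (cl_the _ tp m1'); auto; qs [p;n;n';y;m1;m1';r;tp;tn;tn';tr]).
  assert (rr : cl3 tp m1 m1' r) by (apply (cl_the _ m1 m1'); auto; qs [p;n;n';y;m1;m1';r;tp;tn;tn';tr]).
  assert (T6 : tri n n' y) by (repeat split; auto; congruence).
  destruct (tri_FA _ _ _ T6) as [F|F]; auto. exfalso.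
  destruct (AGq _ _ _ T6 F) as [S1 _].
  assert (rtr : cl3 tp m1 m1' tr) by (apply (cl_the _ tn tn'); auto; qs [p;n;n';y;m1;m1';r;tp;tn;tn';tr]).
  assert (ry : cl3 tp m1 m1' y) by (apply (cl_the _ r tr); auto; qs [p;n;n';y;m1;m1';r;tp;tn;tn';tr]).
  assert (rp0 : cl3 tp m1 m1' p) by (apply (cl_the _ y tp); auto; qs [p;n;n';y;m1;m1';r;tp;tn;tn';tr]).
  assert (T7 : tri p m1 m1') by (repeat split; intro; qs [p;n;n';y;m1;m1';r;tp;tn;tn';tr]).
  pose proof (G1 _ _ _ _ _ _ TR T7 rp0 rm rm' y) as K1.
  assert (T8 : tri p n n') by (repeat split; congruence).
  pose proof (G1 _ _ _ _ _ _ T8 T7 mp mm1 mm1' y) as K2.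
  apply Ny. tauto.
Qed.

Lemma noMix : forall a b x y, tri a b x -> tri a b y -> typeF (cl3 a b x) -> typeA (cl3 a b y) -> False.
Proof.
  intros a b x y Tx Ty FP AQ.
  pose proof (cl3_a a b x) as ma. pose proof (cl3_b a b x) as mb. pose proof (cl3_c a b x) as mx.
  destruct (classic (cl3 a b x y)) as [Hy|Ny].
  { pose proof (G1 _ _ _ _ _ _ Tx Ty ma mb Hy) as K.
    apply (FA_excl (cl3 a b y)); auto. revert FP. apply typeF_ext. intro t; apply K. }
  assert (SA : forall x', cl3 a b x x' -> tri a b x' ->
     typeF (cl3 a x' y) \/ typeF (cl3 b x' y) \/ typeF (cl3 (th a b) x' y)).
  { intros x' Hx' T'. pose proof (G1 _ _ _ _ _ _ Tx T' ma mb Hx') as K.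
    apply stepA; auto. revert FP; apply typeF_ext; intro t; apply K. rewrite K; auto. }
  assert (RULE : forall p n n', cl3 a b x p -> cl3 a b x n -> cl3 a b x n' -> tri p n n' ->
     typeF (cl3 p n y) -> typeF (cl3 p n' y) -> typeF (cl3 n n' y)).
  { intros p n n' H1 H2 H3 T F1 F2. pose proof (G1 _ _ _ _ _ _ Tx T H1 H2 H3) as K.
    apply (rule1 p); auto. revert FP; apply typeF_ext; intro t; apply K. rewrite K; auto. }
  assert (FIN : forall u v, u <> v -> (u = a \/ u = b \/ u = th a b) -> (v = a \/ v = b \/ v = th a b) ->
     typeF (cl3 u v y) -> False).
  { intros u v N1 H1 H2 F. apply (FA_excl (cl3 a b y)); auto.
    revert F. apply FlE; auto; [apply Tx | | ];
    destruct H1 as [E1|[E1|E1]]; destruct H2 as [E2|[E2|E2]]; disj3 [a;b;u;v]. }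
  pose proof (cl_th _ _ _ ma mb) as mc.
  pose proof (cl_th _ _ _ ma mx) as mq. pose proof (cl_th _ _ _ mx mb) as mr.
  pose proof (cl_th _ _ _ mx mc) as ms.
  destruct (Fq _ _ _ Tx FP) as [P1 [P2 P3]].
  destruct Tx as [Hab [Hxa [Hxb Hxc]]].
  remember (th a b) as c eqn:Ec in *. remember (th a x) as q eqn:Eq in *.
  remember (th x b) as r eqn:Er in *. remember (th x c) as s eqn:Es in *.
  assert (Tq : tri a b q) by (repeat split; intro; qs [a;b;c;x;y;q;r;s]).
  assert (Ts : tri a b s) by (repeat split; intro; qs [a;b;c;x;y;q;r;s]).
  assert (Tx : tri a b x) by (repeat split; intro; qs [a;b;c;x;y;q;r;s]).
  destruct (SA x mx Tx) as [Fx|[Fx|Fx]].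
  - destruct (SA s ms Ts) as [Fs|[Fs|Fs]].
    + assert (Fxs : typeF (cl3 x s y)) by (apply (RULE a x s); auto; repeat split; intro; qs [a;b;c;x;y;q;r;s]).
      assert (Fxa : typeF (cl3 x a y)) by (revert Fx; apply FlE; try (intro; qs [a;b;c;x;y;q;r;s]); disj3 [a;b;c;x;y;q;r;s]).
      assert (Fxc : typeF (cl3 x c y)) by (revert Fxs; apply FlE; try (intro; qs [a;b;c;x;y;q;r;s]); disj3 [a;b;c;x;y;q;r;s]).
      apply (FIN a c); [intro; qs [a;b;c;x;y;q;r;s] | disj3 [a;b;c;x;y;q;r;s] | disj3 [a;b;c;x;y;q;r;s] |].
      apply (RULE x a c); auto; repeat split; intro; qs [a;b;c;x;y;q;r;s].
    + assert (Fqa : typeF (cl3 q a y)) by (revert Fx; apply FlE; try (intro; qs [a;b;c;x;y;q;r;s]); disj3 [a;b;c;x;y;q;r;s]).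
      assert (Fqb : typeF (cl3 q b y)) by (revert Fs; apply FlE; try (intro; qs [a;b;c;x;y;q;r;s]); disj3 [a;b;c;x;y;q;r;s]).
      apply (FIN a b); [intro; qs [a;b;c;x;y;q;r;s] | disj3 [a;b;c;x;y;q;r;s] | disj3 [a;b;c;x;y;q;r;s] |].
      apply (RULE q a b); auto; repeat split; intro; qs [a;b;c;x;y;q;r;s].
    + assert (Fxa : typeF (cl3 x a y)) by (revert Fx; apply FlE; try (intro; qs [a;b;c;x;y;q;r;s]); disj3 [a;b;c;x;y;q;r;s]).
      assert (Fxc : typeF (cl3 x c y)) by (revert Fs; apply FlE; try (intro; qs [a;b;c;x;y;q;r;s]); disj3 [a;b;c;x;y;q;r;s]).
      apply (FIN a c); [intro; qs [a;b;c;x;y;q;r;s] | disj3 [a;b;c;x;y;q;r;s] | disj3 [a;b;c;x;y;q;r;s] |].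
      apply (RULE x a c); auto; repeat split; intro; qs [a;b;c;x;y;q;r;s].
  - destruct (SA q mq Tq) as [Fq|[Fq|Fq]].
    + assert (Fxa : typeF (cl3 x a y)) by (revert Fq; apply FlE; try (intro; qs [a;b;c;x;y;q;r;s]); disj3 [a;b;c;x;y;q;r;s]).
      assert (Fxb : typeF (cl3 x b y)) by (revert Fx; apply FlE; try (intro; qs [a;b;c;x;y;q;r;s]); disj3 [a;b;c;x;y;q;r;s]).
      apply (FIN a b); [intro; qs [a;b;c;x;y;q;r;s] | disj3 [a;b;c;x;y;q;r;s] | disj3 [a;b;c;x;y;q;r;s] |].
      apply (RULE x a b); auto; repeat split; intro; qs [a;b;c;x;y;q;r;s].
    + assert (Fxq : typeF (cl3 x q y)) by (apply (RULE b x q); auto; repeat split; intro; qs [a;b;c;x;y;q;r;s]).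
      assert (Fxa : typeF (cl3 x a y)) by (revert Fxq; apply FlE; try (intro; qs [a;b;c;x;y;q;r;s]); disj3 [a;b;c;x;y;q;r;s]).
      assert (Fxb : typeF (cl3 x b y)) by (revert Fx; apply FlE; try (intro; qs [a;b;c;x;y;q;r;s]); disj3 [a;b;c;x;y;q;r;s]).
      apply (FIN a b); [intro; qs [a;b;c;x;y;q;r;s] | disj3 [a;b;c;x;y;q;r;s] | disj3 [a;b;c;x;y;q;r;s] |].
      apply (RULE x a b); auto; repeat split; intro; qs [a;b;c;x;y;q;r;s].
    + assert (Frb : typeF (cl3 r b y)) by (revert Fx; apply FlE; try (intro; qs [a;b;c;x;y;q;r;s]); disj3 [a;b;c;x;y;q;r;s]).
      assert (Frc : typeF (cl3 r c y)) by (revert Fq; apply FlE; try (intro; qs [a;b;c;x;y;q;r;s]); disj3 [a;b;c;x;y;q;r;s]).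
      apply (FIN b c); [intro; qs [a;b;c;x;y;q;r;s] | disj3 [a;b;c;x;y;q;r;s] | disj3 [a;b;c;x;y;q;r;s] |].
      apply (RULE r b c); auto; repeat split; intro; qs [a;b;c;x;y;q;r;s].
  - destruct (SA q mq Tq) as [Fq|[Fq|Fq]].
    + assert (Fxa : typeF (cl3 x a y)) by (revert Fq; apply FlE; try (intro; qs [a;b;c;x;y;q;r;s]); disj3 [a;b;c;x;y;q;r;s]).
      assert (Fxc : typeF (cl3 x c y)) by (revert Fx; apply FlE; try (intro; qs [a;b;c;x;y;q;r;s]); disj3 [a;b;c;x;y;q;r;s]).
      apply (FIN a c); [intro; qs [a;b;c;x;y;q;r;s] | disj3 [a;b;c;x;y;q;r;s] | disj3 [a;b;c;x;y;q;r;s] |].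
      apply (RULE x a c); auto; repeat split; intro; qs [a;b;c;x;y;q;r;s].
    + assert (Fsc : typeF (cl3 s c y)) by (revert Fx; apply FlE; try (intro; qs [a;b;c;x;y;q;r;s]); disj3 [a;b;c;x;y;q;r;s]).
      assert (Fsb : typeF (cl3 s b y)) by (revert Fq; apply FlE; try (intro; qs [a;b;c;x;y;q;r;s]); disj3 [a;b;c;x;y;q;r;s]).
      apply (FIN b c); [intro; qs [a;b;c;x;y;q;r;s] | disj3 [a;b;c;x;y;q;r;s] | disj3 [a;b;c;x;y;q;r;s] |].
      apply (RULE s b c); auto; repeat split; intro; qs [a;b;c;x;y;q;r;s].
    + assert (Fxq : typeF (cl3 x q y)) by (apply (RULE c x q); auto; repeat split; intro; qs [a;b;c;x;y;q;r;s]).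
      assert (Fxa : typeF (cl3 x a y)) by (revert Fxq; apply FlE; try (intro; qs [a;b;c;x;y;q;r;s]); disj3 [a;b;c;x;y;q;r;s]).
      assert (Fxc : typeF (cl3 x c y)) by (revert Fx; apply FlE; try (intro; qs [a;b;c;x;y;q;r;s]); disj3 [a;b;c;x;y;q;r;s]).
      apply (FIN a c); [intro; qs [a;b;c;x;y;q;r;s] | disj3 [a;b;c;x;y;q;r;s] | disj3 [a;b;c;x;y;q;r;s] |].
      apply (RULE x a c); auto; repeat split; intro; qs [a;b;c;x;y;q;r;s].
Qed.

Definition Pl (P : X -> Prop) := exists a b c, tri a b c /\ forall t, P t <-> cl3 a b c t.

Lemma tri_Pl : forall a b c, tri a b c -> Pl (cl3 a b c).
Proof. intros. exists a, b, c. split; auto. tauto. Qed.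

Lemma point_off : forall P u v, Pl P -> u <> v -> exists x, P x /\ tri u v x.
Proof.
  intros P u v [g1 [g2 [g3 [T E]]]] Nuv.
  destruct (classic (tri u v g1)) as [H|H1]. exists g1; split; auto. apply E, cl3_a.
  destruct (classic (tri u v g2)) as [H|H2]. exists g2; split; auto. apply E, cl3_b.
  destruct (classic (tri u v g3)) as [H|H3]. exists g3; split; auto. apply E, cl3_c.
  exfalso. unfold tri in *. destruct T as [T1 [T2 [T3 T4]]].
  apply not_and_or in H1. destruct H1 as [H1|H1]; [contradiction|].
  apply not_and_or in H2. destruct H2 as [H2|H2]; [contradiction|].
  apply not_and_or in H3. destruct H3 as [H3|H3]; [contradiction|].
  assert (K1 : g1 = u \/ g1 = v \/ g1 = th u v) by (apply NNPP; intro; apply H1; tauto).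
  assert (K2 : g2 = u \/ g2 = v \/ g2 = th u v) by (apply NNPP; intro; apply H2; tauto).
  assert (K3 : g3 = u \/ g3 = v \/ g3 = th u v) by (apply NNPP; intro; apply H3; tauto).
  destruct K1 as [K1|[K1|K1]]; destruct K2 as [K2|[K2|K2]]; destruct K3 as [K3|[K3|K3]];
  qs [u;v;g1;g2;g3].
Qed.

Lemma Pl_gen : forall P u v x, Pl P -> tri u v x -> P u -> P v -> P x -> forall t, P t <-> cl3 u v x t.
Proof.
  intros P u v x [g1 [g2 [g3 [T E]]]] T' Hu Hv Hx t.
  rewrite E. rewrite E in Hu, Hv, Hx. rewrite (G1 _ _ _ _ _ _ T T' Hu Hv Hx t). tauto.
Qed.

Lemma Pl_F_ext : forall P Q, (forall t, P t <-> Q t) -> typeF P -> typeF Q.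
Proof. intros P Q E. apply typeF_ext. intro; apply E. Qed.
Lemma Pl_A_ext : forall P Q, (forall t, P t <-> Q t) -> typeA P -> typeA Q.
Proof. intros P Q E. apply typeA_ext. intro; apply E. Qed.

Lemma share2 : forall P Q u v, Pl P -> Pl Q -> P u -> P v -> Q u -> Q v -> u <> v ->
  typeF P -> typeA Q -> False.
Proof.
  intros P Q u v PP PQ Pu Pv Qu Qv Nuv FP AQ.
  destruct (point_off P u v PP Nuv) as [x [Px Tx]].
  destruct (point_off Q u v PQ Nuv) as [y [Qy Ty]].
  pose proof (Pl_gen P u v x PP Tx Pu Pv Px) as E1.
  pose proof (Pl_gen Q u v y PQ Ty Qu Qv Qy) as E2.
  apply (noMix u v x y Tx Ty). apply (Pl_F_ext P); auto. apply (Pl_A_ext Q); auto.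
Qed.

Lemma Pl_other : forall P z, Pl P -> exists u, P u /\ u <> z.
Proof.
  intros P z [g1 [g2 [g3 [T E]]]].
  destruct (classic (g1 = z)) as [H|H].
  - exists g2. split. apply E, cl3_b. destruct T; congruence.
  - exists g1. split; auto. apply E, cl3_a.
Qed.

Lemma share1 : forall P Q z, Pl P -> Pl Q -> P z -> Q z -> typeF P -> typeA Q -> False.
Proof.
  intros P Q z PP PQ Pz Qz FP AQ.
  destruct (Pl_other P z PP) as [u [Pu Nu]].
  destruct (Pl_other Q z PQ) as [w [Qw Nw]].
  destruct (classic (tri z u w)) as [T|T].
  - pose proof (tri_Pl _ _ _ T) as PR.
    destruct (tri_FA _ _ _ T) as [F|A].
    + apply (share2 (cl3 z u w) Q z w PR PQ (cl3_a _ _ _) (cl3_c _ _ _) Qz Qw); auto.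
    + apply (share2 P (cl3 z u w) z u PP PR Pz Pu (cl3_a _ _ _) (cl3_b _ _ _)); auto.
  - assert (K : w = u \/ w = th z u).
    { apply NNPP; intro K. apply T. repeat split; auto; intro; apply K; auto. }
    assert (Qu : Q u).
    { destruct K as [K|K]. subst; auto.
      destruct PQ as [g1 [g2 [g3 [_ E]]]]. apply E. rewrite E in Qz, Qw.
      apply (cl_the _ z w); auto. qs [z;u;w]. }
    apply (share2 P Q z u PP PQ Pz Pu Qz Qu); auto.
Qed.

Lemma share0 : forall P Q, Pl P -> Pl Q -> typeF P -> typeA Q -> False.
Proof.
  intros P Q PP PQ FP AQ.
  destruct PP as [g1 [g2 [g3 [T E]]]] eqn:HPP. clear HPP.
  destruct PQ as [h1 [h2 [h3 [T' E']]]] eqn:HPQ. clear HPQ.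
  assert (Pz : P g1) by (apply E, cl3_a). assert (Qw : Q h1) by (apply E', cl3_a).
  assert (PP' : Pl P) by (exists g1, g2, g3; auto).
  assert (PQ' : Pl Q) by (exists h1, h2, h3; auto).
  destruct (classic (g1 = h1)) as [Ez|Nz].
  - subst. apply (share1 P Q h1); auto.
  - destruct (point_off P g1 h1 PP' Nz) as [x [Px Tx]].
    pose proof (tri_Pl _ _ _ Tx) as PR.
    destruct (tri_FA _ _ _ Tx) as [F|A].
    + apply (share1 (cl3 g1 h1 x) Q h1 PR PQ' (cl3_b _ _ _) Qw); auto.
    + apply (share2 P (cl3 g1 h1 x) g1 x PP' PR Pz Px (cl3_a _ _ _) (cl3_c _ _ _)); auto.
      destruct Tx as [_ [A1 _]]; auto.
Qed.

Lemma global_type : (forall a b c, tri a b c -> typeF (cl3 a b c)) \/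
                    (forall a b c, tri a b c -> typeA (cl3 a b c)).
Proof.
  destruct (classic (exists a b c, tri a b c /\ typeA (cl3 a b c))) as [[a [b [c [T A]]]]|N].
  - right. intros a' b' c' T'. destruct (tri_FA _ _ _ T') as [F|A']; auto.
    exfalso. apply (share0 (cl3 a' b' c') (cl3 a b c)); auto using tri_Pl.
  - left. intros a b c T. destruct (tri_FA _ _ _ T) as [F|A]; auto.
    exfalso; apply N; exists a, b, c; auto.
Qed.

Ltac break_nd H :=
  repeat match type of H with
  | NoDup (_ :: _) => let Hn := fresh "Hn" in apply NoDup_cons_iff in H; destruct H as [Hn H]; simpl in Hn;
       repeat (let K := fresh "K" in apply not_or_and in Hn; destruct Hn as [K Hn])
  end.

Lemma fanoMeet : forall a b p, tri a b p -> typeF (cl3 a b p) ->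
  forall m, cl3 a b p m -> m <> p -> exists z, ln p m z /\ ln a b z.
Proof.
  intros a b p T F m Hm Nmp.
  pose proof (TRI_ex a b p T) as TT.
  destruct (tri_F _ _ _ _ _ _ _ _ _ TT F) as [_ [_ [_ C]]].
  specialize (C m Hm). simpl in C.
  destruct T as [Hab [Hpa [Hpb Hpc]]].
  destruct C as [C|[C|[C|[C|[C|[C|[C|[]]]]]]]]; subst m;
  first [ exists a; rewrite !line_th; split; disj3 [a;b;p;th a b; th a p; th p b; th p (th a b)]
        | exists b; rewrite !line_th; split; disj3 [a;b;p;th a b; th a p; th p b; th p (th a b)]
        | exists (th a b); rewrite !line_th; split; disj3 [a;b;p;th a b; th a p; th p b; th p (th a b)] ].
Qed.

Lemma agPar : forall a b p, tri a b p -> typeA (cl3 a b p) ->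
  exists m0, cl3 a b p m0 /\ m0 <> p /\ (forall z, ln p m0 z -> ~ ln a b z) /\
   (forall m, cl3 a b p m -> m <> p -> (forall z, ln p m z -> ~ ln a b z) -> ln p m0 m).
Proof.
  intros a b p T A.
  pose proof (TRI_ex a b p T) as TT.
  destruct (tri_A _ _ _ _ _ _ _ _ _ TT A) as [E1 [E2 [E3 [E4 ND]]]].
  pose proof (plane9 _ _ _ _ _ _ _ _ _ TT) as P9.
  destruct (TRI_mem _ _ _ _ _ _ _ _ _ TT) as [mc [mq [mr [ms [mu mw]]]]].
  remember (th a b) as c eqn:Ec in *. remember (th a p) as q eqn:Eq in *.
  remember (th p b) as r eqn:Er in *. remember (th p c) as s eqn:Es in *.
  remember (th q b) as u eqn:Eu in *. remember (th q c) as w eqn:Ew in *.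
  break_nd ND.
  exists u. split; auto. split; [intro; qs [a;b;c;p;q;r;s;u;w]|]. split.
  - intros z Hz Hz'. rewrite line_th in Hz, Hz'.
    destruct Hz as [?|[?|?]]; destruct Hz' as [?|[?|?]]; qs [a;b;c;p;q;r;s;u;w].
  - intros m Hm Nm Hd. rewrite line_th.
    pose proof (P9 m Hm) as M9. d9 M9;
    first [ disj3 [a;b;c;p;q;r;s;u;w]
          | exfalso; apply (Hd m); rewrite line_th; [auto | right; right; qs [a;b;c;p;q;r;s;u;w]]
          | exfalso; apply (Hd a); rewrite line_th; [disj3 [a;b;c;p;q;r;s;u;w] | disj3 [a;b;c;p;q;r;s;u;w]]
          | exfalso; apply (Hd b); rewrite line_th; [disj3 [a;b;c;p;q;r;s;u;w] | disj3 [a;b;c;p;q;r;s;u;w]]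
          | exfalso; apply (Hd c); rewrite line_th; [disj3 [a;b;c;p;q;r;s;u;w] | disj3 [a;b;c;p;q;r;s;u;w]] ].
Qed.

Lemma line_obj_iff : forall M u v, lines M -> M u -> M v -> u <> v -> forall t, M t <-> ln u v t.
Proof.
  intros M u v HM Mu Mv N t. destruct (line_obj u v N) as [L [HLl [Lu [Lv E]]]].
  rewrite <- E. apply (uniq_line M L u v); auto.
Qed.

Lemma line_two : forall M, lines M -> exists u v, u <> v /\ M u /\ M v.
Proof. intros M HM. destruct HL as [_ H2]. apply H2; auto. Qed.

Lemma line_other : forall M x, lines M -> exists m, M m /\ m <> x.
Proof.
  intros M x HM. destruct (line_two M HM) as [u [v [N [Mu Mv]]]].
  destruct (classic (u = x)). exists v; split; congruence. exists u; auto.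
Qed.

Lemma two_lines : forall a b c d u v t, a <> b -> c <> d -> u <> v -> ln a b u -> ln a b v ->
  ln c d u -> ln c d v -> ln c d t -> ln a b t.
Proof.
  intros a b c d u v t N1 N2 N3 H1 H2 H3 H4 H5.
  destruct (line_obj a b N1) as [L1 [HL1 [_ [_ E1]]]].
  destruct (line_obj c d N2) as [L2 [HL2 [_ [_ E2]]]].
  apply E1. apply (uniq_line L2 L1 u v); auto; try apply E1; try apply E2; auto.
Qed.

Lemma ln_l : forall a b, ln a b a. Proof. intros; apply line_th; auto. Qed.
Lemma ln_r : forall a b, ln a b b. Proof. intros; apply line_th; auto. Qed.

Lemma plane_def : forall P L x, plane X lines P -> lines L -> subset X L P -> P x -> ~ L x ->
  exists l1 l2, tri l1 l2 x /\ (forall t, P t <-> cl3 l1 l2 x t) /\ (forall t, L t <-> ln l1 l2 t).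
Proof.
  intros P L x [HF [[l [ND [Hlen Hsub]]] Hmin]] HLl HLP Px NLx.
  destruct l as [|g1 [|g2 [|g3 [|g4 l]]]]; simpl in Hlen; try lia.
  break_nd ND.
  assert (Hsub' : forall z, P z -> closure (fun w => w = g1 \/ w = g2 \/ w = g3) z).
  { intros z Pz. specialize (Hsub z Pz). revert Hsub. apply cl_mono.
    intros w [E|[E|[E|[]]]]; subst; apply cl_incl; auto. }
  destruct (classic (g3 = th g1 g2)) as [E|N].
  { exfalso. apply (Hmin [g1;g2]). simpl; lia. intros z Pz. specialize (Hsub' z Pz). revert Hsub'.
    apply cl_mono. intros w [E1|[E1|E1]]; subst.
    apply cl_incl; simpl; auto. apply cl_incl; simpl; auto.
    apply cl_th; apply cl_incl; simpl; auto. }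
  assert (Tg : tri g1 g2 g3) by (repeat split; auto).
  destruct (line_two L HLl) as [l1 [l2 [N12 [L1 L2]]]].
  pose proof (line_obj_iff L l1 l2 HLl L1 L2 N12) as EL.
  assert (Tl : tri l1 l2 x).
  { assert (Kx : ~ ln l1 l2 x) by (rewrite <- EL; auto). rewrite line_th in Kx.
    repeat split; auto; intro; apply Kx; auto. }
  exists l1, l2. split; auto. split; auto.
  intro t. split.
  - intro Pt. pose proof (Hsub' t Pt) as Ky.
    rewrite <- (G1 g1 g2 g3 l1 l2 x Tg Tl (Hsub' _ (HLP _ L1)) (Hsub' _ (HLP _ L2)) (Hsub' _ Px) t) in Ky; auto.
  - apply cl_min; auto. intros w [E|[E|E]]; subst; auto.
Qed.

Lemma kpar0 : (forall a b c, tri a b c -> typeF (cl3 a b c)) -> k_parallel X lines 0.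
Proof.
  intros HF P L x HP HLl HLP Px NLx.
  destruct (plane_def P L x HP HLl HLP Px NLx) as [l1 [l2 [T [EP EL]]]].
  exists []. split; [reflexivity|]. split; [intros M []|]. split; [constructor|].
  intros M [HM [Mx MS]]. exfalso.
  destruct (line_other M x HM) as [m [Mm Nm]].
  pose proof (line_obj_iff M x m HM Mx Mm (not_eq_sym Nm)) as ME.
  destruct (fanoMeet l1 l2 x T (HF _ _ _ T) m (proj1 (EP m) (proj1 (MS m Mm))) Nm) as [z [Z1 Z2]].
  apply ME in Z1. apply MS in Z1. apply (proj2 Z1). apply EL; auto.
Qed.

Lemma kpar1 : (forall a b c, tri a b c -> typeA (cl3 a b c)) -> k_parallel X lines 1.
Proof.
  intros HA P L x HP HLl HLP Px NLx.
  destruct (plane_def P L x HP HLl HLP Px NLx) as [l1 [l2 [T [EP EL]]]].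
  destruct (agPar l1 l2 x T (HA _ _ _ T)) as [m0 [Hm0 [Nm0 [Disj Uniq]]]].
  destruct (line_obj x m0 (not_eq_sym Nm0)) as [M0 [HM0 [M0x [M0m E0]]]].
  exists [M0]. split; [reflexivity|]. split.
  { intros M [<-|[]]. split; auto. split; auto. intros t Ht. apply E0 in Ht. split.
    - apply EP. rewrite line_th in Ht. destruct Ht as [?|[?|?]]; subst; auto. apply cl3_c.
      apply cl_th; auto. apply cl3_c.
    - intro Lt. apply EL in Lt. apply (Disj t); auto. }
  split. { constructor. constructor. constructor. }
  intros M [HM [Mx MS]]. exists M0. split; [simpl; auto|]. intro t.
  destruct (line_other M x HM) as [m [Mm Nm]].
  pose proof (line_obj_iff M x m HM Mx Mm (not_eq_sym Nm)) as ME.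
  assert (K : ln x m0 m).
  { apply Uniq. apply EP, MS, Mm. auto. intros z Z1 Z2. apply ME, MS in Z1. apply (proj2 Z1), EL; auto. }
  apply E0 in K. apply (uniq_line M M0 x m); auto.
Qed.

Lemma projF : (forall a b c, tri a b c -> typeF (cl3 a b c)) -> projective X lines.
Proof.
  intros HF o x y p v Hp Hv Nvp.
  destruct (classic (tri o x y)) as [T|T].
  - assert (mp : cl3 o x y p).
    { rewrite line_th in Hp. destruct Hp as [?|[?|?]]; subst; [apply cl3_b|apply cl3_c|apply cl_th; [apply cl3_b|apply cl3_c]]. }
    assert (mv : cl3 o x y v).
    { rewrite line_th in Hv. destruct Hv as [?|[?|?]]; subst; [apply cl3_a|apply cl3_c|apply cl_th; [apply cl3_a|apply cl3_c]]. }
    destruct (classic (ln o x v)) as [Ov|Ov].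
    + exists v. split; auto. apply ln_l.
    + assert (Tv : tri o x v).
      { rewrite line_th in Ov. repeat split; try (intro; apply Ov; tauto). apply T. }
      pose proof (G1 o x y o x v T Tv (cl3_a _ _ _) (cl3_b _ _ _) mv) as E.
      destruct (fanoMeet o x v Tv (HF _ _ _ Tv) p (proj2 (E p) mp) (not_eq_sym Nvp)) as [z [Z1 Z2]].
      exists z. split; auto.
  - assert (K : o = x \/ y = o \/ y = x \/ y = th o x).
    { apply NNPP; intro K. apply T. repeat split; intro; apply K; auto. }
    rewrite line_th in Hp, Hv.
    destruct K as [K|K].
    + subst x. exists o. split; [|apply ln_l]. rewrite line_th.
      destruct Hp as [E1|[E1|E1]]; destruct Hv as [E2|[E2|E2]]; disj3 [o;y;v;p].
    + exists v. split; [apply ln_l|]. rewrite line_th.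
      destruct K as [K|[K|K]]; destruct Hv as [E2|[E2|E2]]; disj3 [o;x;y;v].
Qed.

Lemma affA : (forall a b c, tri a b c -> typeA (cl3 a b c)) -> affine X lines.
Proof.
  intros HA o x y p Hp Np.
  assert (third_o : forall v, o <> y -> ln o y v -> ln o y p -> v <> p -> ln v p o).
  { intros v N1 H1 H2 N2. apply (two_lines v p o y v p o); auto using ln_l, ln_r. }
  assert (CASEP : o <> y -> ln o y p -> exists u, ln o y u /\ forall v, ln o y v ->
            (u = v <-> ~ (exists z, ln v p z /\ ln o x z))).
  { intros Noy Hpy. exists p. split; auto. intros v Hv. split.
    - intros <- [z [Z1 Z2]]. rewrite line_th, th_xx in Z1. apply Np.
      destruct Z1 as [Z1|[Z1|Z1]]; subst; auto.
    - intro H. apply NNPP; intro Nvp. apply H. exists o. split.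
      apply third_o; auto. apply ln_l. }
  destruct (classic (o = x)) as [Eox|Nox].
  { subst x. assert (Npo : p <> o) by (intro; subst; apply Np; apply ln_l).
    assert (Noy : o <> y) by (intro; subst; rewrite line_th, th_xx in Hp; tauto).
    apply CASEP; auto. }
  destruct (classic (tri o x y)) as [T|T].
  2:{ exfalso. assert (K : y = o \/ y = x \/ y = th o x).
      { apply NNPP; intro K. apply T. repeat split; auto; intro; apply K; auto. }
      apply Np. rewrite line_th in Hp |- *.
      destruct K as [K|[K|K]]; destruct Hp as [E|[E|E]]; disj3 [o;x;y;p]. }
  assert (mp : cl3 o x y p).
  { rewrite line_th in Hp. destruct Hp as [?|[?|?]]; subst; [apply cl3_b|apply cl3_c|apply cl_th; [apply cl3_b|apply cl3_c]]. }
  assert (Tp : tri o x p).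
  { rewrite line_th in Np. repeat split; auto; intro; apply Np; auto. }
  pose proof (G1 o x y o x p T Tp (cl3_a _ _ _) (cl3_b _ _ _) mp) as EP.
  destruct (agPar o x p Tp (HA _ _ _ Tp)) as [m0 [Hm0 [Nm0 [Disj Uniq]]]].
  assert (Noy : o <> y) by (destruct T as [_ [A _]]; auto).
  destruct (classic (ln o y p)) as [Hpy|Hpy]. { apply CASEP; auto. }
  assert (Ho : ~ ln p m0 o) by (intro H; apply (Disj o H); apply ln_l).
  assert (mline : forall t, ln o y t -> cl3 o x p t).
  { intros t Ht. apply EP. rewrite line_th in Ht.
    destruct Ht as [?|[?|?]]; subst; [apply cl3_a|apply cl3_c|apply cl_th; [apply cl3_a|apply cl3_c]]. }
  assert (EX : exists u, ln o y u /\ ln p m0 u).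
  { apply NNPP; intro NE.
    assert (Tm : tri p m0 o).
    { rewrite line_th in Ho. repeat split; auto; intro; apply Ho; auto. }
    assert (E2 : forall t, cl3 p m0 o t <-> cl3 o x p t).
    { apply G1; auto. apply cl3_c. apply cl3_a. }
    destruct (agPar p m0 o Tm (HA _ _ _ Tm)) as [m1 [Hm1 [Nm1 [Disj1 Uniq1]]]].
    assert (K1 : ln o m1 x).
    { apply Uniq1. apply E2, cl3_b. intro; subst; auto.
      intros z Z1 Z2. apply (Disj z); auto. }
    assert (K2 : ln o m1 y).
    { apply Uniq1. apply E2, mline, ln_r. intro; subst; apply Noy; auto.
      intros z Z1 Z2. apply NE. exists z; split; auto. }
    assert (K3 : ln o x y).
    { apply (two_lines o x o m1 o x y); auto using ln_l, ln_r. }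
    rewrite line_th in K3. destruct T as [_ [A1 [A2 A3]]]. tauto. }
  destruct EX as [u [Hu1 Hu2]].
  assert (Nup : u <> p) by (intro; subst; auto).
  exists u. split; auto. intros v Hv. split.
  - intros <- [z [Z1 Z2]]. apply (Disj z); auto.
    apply (two_lines p m0 u p u p z); auto using ln_l, ln_r.
  - intro H. apply NNPP; intro Nuv.
    assert (Nvp : v <> p) by (intro; subst; auto).
    assert (K : ln p m0 v).
    { apply Uniq. apply mline; auto. auto.
      intros z Z1 Z2. apply H. exists z. split; auto. apply ln_sym; auto. }
    apply Ho. apply (two_lines p m0 o y u v o); auto using ln_l.
Qed.

Lemma main_thm : (exists p : nat, (p = 0 \/ p = 1) /\ k_parallel X lines p) /\
  (projective X lines \/ affine X lines).
Proof.
  destruct global_type as [F|A].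
  - split. exists 0. split; auto. apply kpar0; auto. left; apply projF; auto.
  - split. exists 1. split; auto. apply kpar1; auto. right; apply affA; auto.
Qed.

End Main.

Theorem theorem4p2p7 (X : Type) (lines : (X -> Prop) -> Prop) :
  is_liner X lines -> steiner X lines -> regular3 X lines ->
  (exists p : nat, (p = 0 \/ p = 1) /\ k_parallel X lines p) /\
  (projective X lines \/ affine X lines).
Proof.
  intros HL HS HR. eapply main_thm; eauto.
Qed.
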